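(* Let $I$ be a finite index set and $\{(x_i,f_i,g_i)\}_{i\in I}\subset\mathbb{R}^n\times\mathbb{R}\times\mathbb{R}^n$. The following are equivalent: (i) there exists a convex function $f:\mathbb{R}^n\to\mathbb{R}$ which is differentiable and strictly convex and satisfies $f_i=f(x_i)$, $g_i=\nabla f(x_i)$ for all $i\in I$; (ii) for every $i,j\in I$: $f_i-f_j-\langle g_j,x_i-x_j\rangle\ge0$; $f_i-f_j-\langle g_j,x_i-x_j\rangle>0$ if $x_i\ne x_j$; and $f_i-f_j-\langle g_j,x_i-x_j\rangle>0$ if $g_i\ne g_j$. *)

(* Defs.v *)
From HB Require Import structures.
From mathcomp Require Import all_boot all_order all_algebra.
From mathcomp Require Import all_classical all_reals all_analysis.
Set Implicit Arguments. Unset Strict Implicit. Unset Printing Implicit Defensive.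
Import Order.TTheory GRing.Theory Num.Theory.
Import numFieldNormedType.Exports.
Local Open Scope ring_scope.

Definition dotv (R : realType) (n : nat) (u v : 'rV[R]_n) : R :=
  \sum_(k < n) u ord0 k * v ord0 k.

Definition convex_fun (R : realType) (n : nat) (f : 'rV[R]_n -> R) : Prop :=
  forall (x y : 'rV[R]_n) (t : R), 0 <= t -> t <= 1 ->
    f (t *: x + (1 - t) *: y) <= t * f x + (1 - t) * f y.

Definition strictly_convex_fun (R : realType) (n : nat) (f : 'rV[R]_n -> R) : Prop :=
  forall (x y : 'rV[R]_n) (t : R), x != y -> 0 < t -> t < 1 ->
    f (t *: x + (1 - t) *: y) < t * f x + (1 - t) * f y.

Definition is_gradient (R : realType) (n : nat) (f : 'rV[R]_n -> R)
  (x g : 'rV[R]_n) : Prop :=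
  differentiable f x /\ forall v : 'rV[R]_n, 'd f x v = dotv g v.

(* Main.v *)
Require Import Defs.
From HB Require Import structures.
From mathcomp Require Import all_boot all_order all_algebra.
From mathcomp Require Import all_classical all_reals all_analysis.
From mathcomp Require Import ring lra.
Import Order.TTheory GRing.Theory Num.Theory.
Import numFieldNormedType.Exports.
Local Open Scope ring_scope.

Module Helpers.
Set Implicit Arguments. Unset Strict Implicit. Unset Printing Implicit Defensive.

Section Quad.
Variable R : realType.

Lemma quad_diff (V : normedModType R) (f : V -> R) (L : {linear V -> R}) (x : V) (C : R) :
  continuous L -> (forall h, `|f (h + x) - f x - L h| <= C * `|h| ^+ 2) ->
  differentiable f x /\ 'd f x = L :> (V -> R).
Proof.
move=> Lc Hq.
have Lo : f \o shift x = cst (f x) + L +o_0 id.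
  apply/eqaddoP => eps eps0.
  apply/nbhs_norm0P; exists (eps / (`|C| + 1)).
    by rewrite /= divr_gt0 // ltr_pwDr.
  move=> h /= hlt.
  have := Hq h; rewrite opprD addrA => /le_trans; apply.
  have C1 : 0 < `|C| + 1 by rewrite ltr_pwDr.
  rewrite expr2 mulrA ler_wpM2r //.
  move: hlt; rewrite ltr_pdivlMr // => hlt.
  have := ler_norm C; have := normr_ge0 h; have := normr_ge0 C; nra.
have dE := diff_unique Lc Lo.
split; last exact: dE.
by apply/diff_locallyP; rewrite dE.
Qed.
End Quad.

Section Dot.
Variables (R : realType) (n : nat).
Implicit Types u v w : 'rV[R]_n.

Lemma dotvDr u v w : dotv u (v + w) = dotv u v + dotv u w.
Proof. by rewrite /dotv -big_split; apply: eq_bigr => k _; rewrite mxE mulrDr. Qed.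
Lemma dotvZr u a v : dotv u (a *: v) = a * dotv u v.
Proof. by rewrite /dotv mulr_sumr; apply: eq_bigr => k _; rewrite mxE mulrCA. Qed.
Lemma dotvC u v : dotv u v = dotv v u.
Proof. by rewrite /dotv; apply: eq_bigr => k _; rewrite mulrC. Qed.
Lemma dotvDl u v w : dotv (v + w) u = dotv v u + dotv w u.
Proof. by rewrite dotvC dotvDr !(dotvC u). Qed.
Lemma dotvZl u a v : dotv (a *: v) u = a * dotv v u.
Proof. by rewrite dotvC dotvZr dotvC. Qed.
Lemma dotvNr u v : dotv u (- v) = - dotv u v.
Proof. by rewrite -scaleN1r dotvZr mulN1r. Qed.
Lemma dotvNl u v : dotv (- v) u = - dotv v u.
Proof. by rewrite dotvC dotvNr dotvC. Qed.
Lemma dotvBr u v w : dotv u (v - w) = dotv u v - dotv u w.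
Proof. by rewrite dotvDr dotvNr. Qed.
Lemma dotvBl u v w : dotv (v - w) u = dotv v u - dotv w u.
Proof. by rewrite dotvDl dotvNl. Qed.
Lemma dotv0r u : dotv u 0 = 0.
Proof. by rewrite /dotv big1 // => k _; rewrite mxE mulr0. Qed.
Lemma dotv_ge0 u : 0 <= dotv u u.
Proof. by rewrite /dotv sumr_ge0 // => k _; rewrite -expr2 sqr_ge0. Qed.
Lemma dotv_gt0 u : u != 0 -> 0 < dotv u u.
Proof.
move=> u0; rewrite lt_def dotv_ge0 andbT; apply: contra u0 => /eqP.
rewrite /dotv => /eqP; rewrite psumr_eq0; last by move=> k _; rewrite -expr2 sqr_ge0.
move=> /allP H; apply/eqP/rowP => k; rewrite mxE.
have := H k (mem_index_enum k); rewrite /= -expr2 sqrf_eq0 => /eqP ->//.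
Qed.
Lemma coord_le_norm v k : `|v ord0 k| <= `|v|.
Proof.
have -> : `|v| = mx_norm v by [].
rewrite mx_normrE; exact: (le_bigmax _ _ (ord0, k)).
Qed.
Lemma dotv_delta u k : dotv u (delta_mx ord0 k) = u ord0 k.
Proof.
rewrite /dotv (bigD1 k) //= big1 ?addr0; first by rewrite mxE !eqxx mulr1.
by move=> l lk; rewrite mxE eqxx /= (negbTE lk) mulr0.
Qed.
Lemma dotv_bound u v : `|dotv u v| <= (\sum_k `|u ord0 k|) * `|v|.
Proof.
rewrite /dotv mulr_suml; apply: le_trans (ler_norm_sum _ _ _) _.
apply: ler_sum => k _; rewrite normrM ler_wpM2l //; exact: coord_le_norm.
Qed.
Lemma dotv_self_bound v : dotv v v <= n%:R * `|v| ^+ 2.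
Proof.
rewrite /dotv; have -> : n%:R * `|v| ^+ 2 = \sum_(k < n) `|v| ^+ 2.
  by rewrite sumr_const card_ord mulr_natl.
apply: ler_sum => k _; rewrite -expr2 -real_normK ?num_real //.
by rewrite lerXn2r ?nnegrE ?normr_ge0 // coord_le_norm.
Qed.

Lemma dotv_linear u : linear (dotv u).
Proof. by move=> a v w; rewrite dotvDr dotvZr. Qed.
HB.instance Definition _ u := GRing.isLinear.Build R 'rV[R]_n R *:%R (dotv u) (dotv_linear u).
Lemma dotv_continuous u : continuous (dotv u).
Proof.
apply: (@bounded_linear_continuous _ _ _ (dotv u)).
apply/bounded_funP => r; exists ((\sum_k `|u ord0 k|) * r) => v vr.
apply: le_trans (dotv_bound _ _) _; rewrite ler_wpM2l // sumr_ge0 // => k _.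
Qed.

Lemma aff_diff (c : R) (G p z : 'rV[R]_n) :
  differentiable (fun w => c + dotv G (w - p)) z /\
  'd (fun w => c + dotv G (w - p)) z = dotv G :> ('rV[R]_n -> R).
Proof.
apply: (quad_diff (C := 0)); first exact: dotv_continuous.
move=> t; rewrite mul0r.
have -> : c + dotv G (t + z - p) - (c + dotv G (z - p)) - dotv G t = 0.
  by rewrite -addrA dotvDr; ring.
by rewrite normr0.
Qed.

Lemma sq_diff (z : 'rV[R]_n) :
  differentiable (fun w => dotv w w) z /\
  'd (fun w => dotv w w) z = dotv (2 *: z) :> ('rV[R]_n -> R).
Proof.
apply: (quad_diff (C := n%:R)); first exact: dotv_continuous.
move=> t.
have -> : dotv (t + z) (t + z) - dotv z z - dotv (2 *: z) t = dotv t t.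
  rewrite !dotvDl !dotvDr dotvZl (dotvC t z); ring.
by rewrite ger0_norm ?dotv_ge0 // dotv_self_bound.
Qed.
End Dot.

Section Hub.
Variable R : realType.
Implicit Types u v a b : R.
Definition s1 u : R := if u <= -1 then - u / 2 else if 1 <= u then u / 2 else (u ^+ 2 + 1) / 4.
Definition s1' u : R := if u <= -1 then - 1 / 2 else if 1 <= u then 1 / 2 else u / 2.

Lemma s1_quad u v : 0 <= s1 v - s1 u - s1' u * (v - u) <= (v - u) ^+ 2 / 4.
Proof.
rewrite /s1 /s1'.
case: (lerP u (-1)) => Hu; case: (lerP 1 u) => Hu';
case: (lerP v (-1)) => Hv; case: (lerP 1 v) => Hv'; move: (sqr_ge0 (v - u)) => Hsq; apply/andP; split; nra.
Qed.
Lemma s1'_bound u : -1/2 <= s1' u <= 1/2.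
Proof.
rewrite /s1'; case: (lerP u (-1)) => Hu; case: (lerP 1 u) => Hu'; apply/andP; split; lra.
Qed.

Lemma s1_bounds u : `|u| / 2 <= s1 u <= `|u| / 2 + 1/4.
Proof.
rewrite /s1; have [u0|u0] := lerP 0 u; [rewrite ger0_norm // | rewrite ltr0_norm //];
case: (lerP u (-1)) => Hu; case: (lerP 1 u) => Hu'; apply/andP; split; nra.
Qed.

Lemma s1_hi u : 1 <= u -> s1 u = u / 2 /\ s1' u = 1 / 2.
Proof.
move=> Hu; have H1 : (u <= -1) = false by apply/negbTE; rewrite -ltNge; lra.
by rewrite /s1 /s1' H1 Hu.
Qed.

Lemma s1_lo u : u <= -1 -> s1 u = - u / 2 /\ s1' u = - 1 / 2.
Proof. by move=> Hu; rewrite /s1 /s1' Hu. Qed.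

Variable h : R.
Hypothesis h0 : 0 < h.

Definition sh u := h * s1 (u / h).
Definition sh' u := s1' (u / h).

Lemma sh_quad u v : 0 <= sh v - sh u - sh' u * (v - u) <= (4 * h)^-1 * (v - u) ^+ 2.
Proof.
have hn0 : h != 0 by rewrite gt_eqF.
have E : sh v - sh u - sh' u * (v - u) = h * (s1 (v/h) - s1 (u/h) - s1' (u/h) * (v/h - u/h)).
  by rewrite /sh /sh'; field.
have E2 : (4 * h)^-1 * (v - u) ^+ 2 = h * ((v/h - u/h) ^+ 2 / 4).
  by field.
rewrite E E2; have /andP[A B] := s1_quad (u/h) (v/h).
by apply/andP; split; [exact: mulr_ge0 (ltW h0) A | rewrite ler_pM2l].
Qed.

Lemma sh'_bound u : -1/2 <= sh' u <= 1/2.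
Proof. exact: s1'_bound. Qed.

Lemma sh_bounds u : `|u| / 2 <= sh u <= `|u| / 2 + h / 4.
Proof.
have /andP[A B] := s1_bounds (u / h).
have E : `|u| / 2 = h * (`|u / h| / 2).
  by rewrite normrM normfV (gtr0_norm h0); field; rewrite gt_eqF.
rewrite /sh E; apply/andP; split; first by rewrite ler_pM2l.
have -> : h * (`|u / h| / 2) + h / 4 = h * (`|u / h| / 2 + 1/4) by field.
by rewrite ler_pM2l.
Qed.

Lemma sh_hi u : h <= u -> sh u = u / 2 /\ sh' u = 1 / 2.
Proof.
move=> Hu; have Hu' : 1 <= u / h by rewrite ler_pdivlMr // mul1r.
have [A B] := s1_hi Hu'; rewrite /sh /sh' A B; split=> //; field; rewrite gt_eqF //.
Qed.

Lemma sh_lo u : u <= - h -> sh u = - u / 2 /\ sh' u = - 1 / 2.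
Proof.
move=> Hu; have Hu' : u / h <= -1 by rewrite ler_pdivrMr // mulN1r.
have [A B] := s1_lo Hu'; rewrite /sh /sh' A B; split=> //; field; rewrite gt_eqF //.
Qed.

Lemma sh_lip u v : `|sh u - sh v| <= `|u - v| / 2.
Proof.
have /andP[A _] := sh_quad u v; have /andP[B _] := sh_quad v u.
have /andP[C1 C2] := sh'_bound u; have /andP[D1 D2] := sh'_bound v.
rewrite ler_norml; have [uv|uv] := lerP 0 (u - v);
  [rewrite ger0_norm // | rewrite ltr0_norm //]; apply/andP; split; nra.
Qed.

Lemma sh_convex t u u' : 0 <= t -> t <= 1 ->
  sh (t * u + (1 - t) * u') <= t * sh u + (1 - t) * sh u'.
Proof.
move=> t0 t1; set w := t * u + (1 - t) * u'.
have /andP[A _] := sh_quad w u; have /andP[B _] := sh_quad w u'.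
have H : 0 <= t * (sh u - sh w - sh' w * (u - w)) + (1 - t) * (sh u' - sh w - sh' w * (u' - w)).
  by rewrite addr_ge0 // mulr_ge0 // subr_ge0.
have E : t * (sh u - sh w - sh' w * (u - w)) + (1 - t) * (sh u' - sh w - sh' w * (u' - w))
   = t * sh u + (1 - t) * sh u' - sh w by rewrite /w; ring.
by rewrite -subr_ge0 -E.
Qed.

Definition smax a b := (a + b) / 2 + sh (a - b).

Lemma smax_ge_l a b : a <= smax a b.
Proof.
have /andP[A _] := sh_bounds (a - b); rewrite /smax.
have [uv|uv] := lerP 0 (a - b); [move: A; rewrite ger0_norm // | move: A; rewrite ltr0_norm //]; lra.
Qed.

Lemma smax_ge_r a b : b <= smax a b.
Proof.
have /andP[A _] := sh_bounds (a - b); rewrite /smax.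
have [uv|uv] := lerP 0 (a - b); [move: A; rewrite ger0_norm // | move: A; rewrite ltr0_norm //]; lra.
Qed.

Lemma smax_le a b B : a <= B -> b <= B -> smax a b <= B + h / 4.
Proof.
move=> aB bB; have /andP[_ A] := sh_bounds (a - b); rewrite /smax.
have [uv|uv] := lerP 0 (a - b); [move: A; rewrite ger0_norm // | move: A; rewrite ltr0_norm //]; lra.
Qed.

Lemma smax_l a b : h <= a - b -> smax a b = a.
Proof. by move=> H; rewrite /smax (sh_hi H).1; field. Qed.

Lemma smax_r a b : a - b <= - h -> smax a b = b.
Proof. by move=> H; rewrite /smax (sh_lo H).1; field. Qed.

Lemma smax_mono a b b' : b <= b' -> smax a b <= smax a b'.
Proof.
move=> bb; have H := sh_lip (a - b) (a - b').
have E : a - b - (a - b') = b' - b by ring.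
move: H; rewrite E [`|b' - b|]ger0_norm ?subr_ge0 // ler_norml => /andP[A B].
rewrite /smax; lra.
Qed.

Lemma smax_convex t a a' b b' : 0 <= t -> t <= 1 ->
  smax (t * a + (1 - t) * a') (t * b + (1 - t) * b') <= t * smax a b + (1 - t) * smax a' b'.
Proof.
move=> t0 t1; have := sh_convex (a - b) (a' - b') t0 t1; rewrite /smax.
have -> : t * a + (1 - t) * a' - (t * b + (1 - t) * b') = t * (a - b) + (1 - t) * (a' - b') by ring.
move=> H; have E : t * ((a + b) / 2 + sh (a - b)) + (1 - t) * ((a' + b') / 2 + sh (a' - b'))
  = (t * a + (1 - t) * a' + (t * b + (1 - t) * b')) / 2 + (t * sh (a - b) + (1 - t) * sh (a' - b')) by ring.
by rewrite E lerD2l.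
Qed.

Lemma sh_diff u : differentiable sh u /\ 'd sh u = ( *:%R (sh' u)) :> (R -> R).
Proof.
apply: (quad_diff (C := (4 * h)^-1)); first exact: scaler_continuous.
move=> t; have /andP[A B] := sh_quad u (t + u).
rewrite addrK in A B; rewrite real_normK ?num_real // ger0_norm //.
Qed.

Section SD.
Variable V : normedModType R.
Lemma smax_diff (A B : V -> R) z : differentiable A z -> differentiable B z ->
  differentiable (fun w => smax (A w) (B w)) z /\
  forall v : V, 'd (fun w => smax (A w) (B w)) z v =
     (2^-1 + sh' (A z - B z)) * 'd A z v + (2^-1 - sh' (A z - B z)) * 'd B z v.
Proof.
move=> dA dB.
have E : (fun w => smax (A w) (B w)) = (2^-1 *: (A + B)) + (sh \o (A - B)).
  by apply/funext => w; rewrite /smax /= mulrC.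
have dAB : differentiable (A - B) z by exact: differentiableB.
have dsh : differentiable sh ((A - B) z) by exact: (sh_diff _).1.
have dc : differentiable (sh \o (A - B)) z by exact: differentiable_comp.
have dl : differentiable (2^-1 *: (A + B)) z by exact/differentiableZ/differentiableD.
rewrite E; split; first exact: differentiableD.
move=> v.
have H1 := diffD dl dc.
have H2 := diffZ (2^-1) (differentiableD dA dB).
have H3 := diffD dA dB.
have H4 := diff_comp dAB dsh.
have H5 := diffB dA dB.
have H6 := (sh_diff ((A - B) z)).2.
have e1 : 'd (2^-1 *: (A + B) + (sh \o (A - B))) z v = 'd (2^-1 *: (A + B)) z v + 'd (sh \o (A - B)) z v
  := congr1 (fun k => k v) H1.
have e2 : 'd (2^-1 *: (A + B)) z v = 2^-1 * ('d A z v + 'd B z v)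
  := etrans (congr1 (fun k => k v) H2) (congr1 (fun k => 2^-1 * k v) H3).
have e3 : 'd (sh \o (A - B)) z v = sh' (A z - B z) * ('d A z v - 'd B z v)
  := etrans (congr1 (fun k => k v) H4) (etrans (congr1 (fun k => k ('d (A - B) z v)) H6) (congr1 (fun k => sh' (A z - B z) * k v) H5)).
apply: (etrans e1); apply: (etrans (congr2 +%R e2 e3)).
move: (sh' (A z - B z)) ('d A z v) ('d B z v) => k a b. ring.
Qed.
End SD.
End Hub.


Section Fold.
Variables (R : realType) (n : nat) (I : eqType) (h : R) (L : R).
Hypothesis h0 : 0 < h.
Variables (c : I -> R) (G p : I -> 'rV[R]_n).

Definition psi j (w : 'rV[R]_n) := c j + dotv (G j) (w - p j).
Fixpoint fsm (s : seq I) : 'rV[R]_n -> R :=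
  if s is j :: s' then fun w => smax h (psi j w) (fsm s' w) else fun _ => L.

Lemma fsm_diff s z : differentiable (fsm s) z.
Proof.
elim: s => [|j s IH] /=; first exact: differentiable_cst.
exact: (smax_diff h0 (aff_diff _ _ _ _).1 IH).1.
Qed.

Lemma psi_affine j x y t : psi j (t *: x + (1 - t) *: y) = t * psi j x + (1 - t) * psi j y.
Proof. rewrite /psi !dotvBr dotvDr !dotvZr; ring. Qed.

Lemma fsm_convex s : convex_fun (fsm s).
Proof.
elim: s => [|j s IH] x y t t0 t1 /=.
  by have -> : t * L + (1 - t) * L = L by ring.
rewrite psi_affine; apply: le_trans (smax_mono h0 _ (IH x y t t0 t1)) _.
exact: smax_convex.
Qed.

Lemma fsm_le s z B : L <= B -> (forall j, j \in s -> psi j z <= B) ->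
  fsm s z <= B + (size s)%:R * (h / 4).
Proof.
elim: s => [|j s IH] LB Hs /=; first by rewrite mul0r addr0.
have H1 : fsm s z <= B + (size s)%:R * (h / 4).
  by apply: IH => // k ks; apply: Hs; rewrite inE ks orbT.
have H2 : psi j z <= B by apply: Hs; rewrite inE eqxx.
have H3 : 0 <= (size s)%:R * (h / 4) by rewrite mulr_ge0 // ?ler0n // divr_ge0 // ltW.
apply: le_trans (smax_le h0 (B := B + (size s)%:R * (h / 4)) _ _) _ => //.
  lra.
rewrite -addn1 natrD; lra.
Qed.

Lemma psi_d j z v : 'd (psi j) z v = dotv (G j) v.
Proof. exact: (congr1 (fun k => k v) (aff_diff (c j) (G j) (p j) z).2). Qed.

Lemma fsm_exact s1 j s2 z M :
  (forall k, k \in s1 ++ s2 -> psi k z <= psi j z - M) -> L <= psi j z - M ->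
  (size s2)%:R * (h / 4) + h <= M ->
  (fsm (s1 ++ j :: s2) z = psi j z) /\ (forall v : 'rV[R]_n, 'd (fsm (s1 ++ j :: s2)) z v = dotv (G j) v).
Proof.
move=> Hk HL HM.
have H3 : 0 <= (size s2)%:R * (h / 4) by rewrite mulr_ge0 // ?ler0n // divr_ge0 // ltW.
elim: s1 Hk => [|k s1 IH] Hk.
  have Hb : fsm s2 z <= psi j z - M + (size s2)%:R * (h / 4) by apply: fsm_le.
  have Hh : h <= psi j z - fsm s2 z by lra.
  rewrite /=; split; first by have := smax_l h0 Hh; move=> ->.
  move=> v.
  have D : 'd (fun w => smax h (psi j w) (fsm s2 w)) z v = (2^-1 + sh' h (psi j z - fsm s2 z)) * 'd (psi j) z v +
     (2^-1 - sh' h (psi j z - fsm s2 z)) * 'd (fsm s2) z v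
    := (smax_diff h0 (aff_diff (c j) (G j) (p j) z).1 (fsm_diff s2 z)).2 v.
  rewrite D (sh_hi h0 Hh).2 psi_d.
  move: (dotv (G j) v) ('d (fsm s2) z v) => a b; lra.
have [IHv IHd] : fsm (s1 ++ j :: s2) z = psi j z /\
   (forall v : 'rV_n, 'd (fsm (s1 ++ j :: s2)) z v = dotv (G j) v).
  by apply: IH => k0 H; apply: Hk; rewrite /= inE H orbT.
have Hpk : psi k z <= psi j z - M by apply: Hk; rewrite /= inE eqxx.
have Hh : psi k z - fsm (s1 ++ j :: s2) z <= - h by rewrite IHv; lra.
rewrite /=; split; first by have := smax_r h0 Hh; move=> ->.
move=> v.
have D : 'd (fun w => smax h (psi k w) (fsm (s1 ++ j :: s2) w)) z v =
   (2^-1 + sh' h (psi k z - fsm (s1 ++ j :: s2) z)) * 'd (psi k) z v +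
   (2^-1 - sh' h (psi k z - fsm (s1 ++ j :: s2) z)) * 'd (fsm (s1 ++ j :: s2)) z v
  := (smax_diff h0 (aff_diff (c k) (G k) (p k) z).1 (fsm_diff _ z)).2 v.
rewrite D (sh_lo h0 Hh).2 IHd.
move: (dotv (G j) v) ('d (psi k) z v) => a b; lra.
Qed.
End Fold.


Section Fwd.
Variables (R : realType) (n : nat).
Implicit Types (f : 'rV[R]_n -> R) (x y : 'rV[R]_n).

Lemma diff_approx f x : differentiable f x -> forall eps, 0 < eps ->
  exists2 r, 0 < r & forall t, `|t| < r -> `|f (t + x) - f x - 'd f x t| <= eps * `|t|.
Proof.
move=> df eps eps0.
have := diff_locally df; move/eqaddoP => /(_ eps eps0) /nbhs_norm0P [r /= r0 Hr].
exists r => // t tr; have := Hr t tr; rewrite /= opprD addrA; done.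
Qed.

Lemma grad_ineq f x y : convex_fun f -> differentiable f x ->
  f x + 'd f x (y - x) <= f y.
Proof.
move=> cf df; set d := y - x.
rewrite leNgt; apply/negP => Hlt.
set c := f x + 'd f x d - f y.
have c0 : 0 < c by rewrite /c subr_gt0.
have nd0 : 0 <= `|d| by [].
set eps := c / (2 * (`|d| + 1)).
have eps0 : 0 < eps by rewrite /eps divr_gt0 // mulr_gt0 // ltr_pwDr.
have [r r0 Hr] := diff_approx df eps0.
set t := Num.min (1/2) (r / (2 * (`|d| + 1))).
have t0 : 0 < t by rewrite /t lt_min; apply/andP; split; [lra | rewrite divr_gt0 // mulr_gt0 // ltr_pwDr].
have t1 : t <= 1/2 by rewrite /t ge_min lexx.
have tr : t <= r / (2 * (`|d| + 1)) by rewrite /t ge_min lexx orbT.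
have td : `|t *: d| < r.
  rewrite normrZ gtr0_norm //.
  move: tr; rewrite ler_pdivlMr ?mulr_gt0 ?ltr_pwDr // => tr.
  have : t * `|d| <= t * (2 * (`|d| + 1)) by rewrite ler_pM2l //; lra.
  lra.
have A := Hr _ td.
have t1' : t <= 1 by lra.
have B := cf y x t (ltW t0) t1'.
have E : t *: y + (1 - t) *: x = t *: d + x.
  by apply/rowP => k; rewrite /d !mxE; ring.
rewrite E in B.
rewrite linearZ /= in A.
move: A; rewrite ler_norml => /andP[A _].
have Hdn : eps * `|t *: d| = t * (eps * `|d|) by rewrite normrZ gtr0_norm //; ring.
rewrite Hdn in A.
have Hc : eps * `|d| < c.
  have K0 : 0 < 2 * (`|d| + 1) by rewrite mulr_gt0 // ltr_pwDr.
  have Eq : eps * `|d| * (2 * (`|d| + 1)) = c * `|d| by rewrite /eps mulrAC divfK // gt_eqF.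
  rewrite -(ltr_pM2r K0) Eq ltr_pM2l //; lra.
have : t * c <= t * (eps * `|d|).
  have A' : - (t * (eps * `|d|)) <= f (t *: d + x) - f x - t * 'd f x d by exact: A.
  rewrite /c; move: (f (t *: d + x)) (f x) (f y) ('d f x d) (eps * `|d|) A' B => a b c' D e A1 B1; nra.
rewrite ler_pM2l //; lra.
Qed.

Lemma grad_unique f a b1 b2 : is_gradient f a b1 -> is_gradient f a b2 -> b1 = b2.
Proof.
move=> [_ g1] [_ g2]; apply/rowP => k.
by rewrite -(dotv_delta b1) -(dotv_delta b2) -g1 -g2.
Qed.

Lemma fwd_dir (I : finType) (x : I -> 'rV[R]_n) (fv : I -> R) (g : I -> 'rV[R]_n) :
  (exists f : 'rV[R]_n -> R,
      convex_fun f /\ (forall z, differentiable f z) /\ strictly_convex_fun f /\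
      (forall i, fv i = f (x i) /\ is_gradient f (x i) (g i))) ->
  (forall i j : I,
      0 <= fv i - fv j - dotv (g j) (x i - x j) /\
      (x i != x j -> 0 < fv i - fv j - dotv (g j) (x i - x j)) /\
      (g i != g j -> 0 < fv i - fv j - dotv (g j) (x i - x j))).
Proof.
case=> f [cf [df [scf Hi]]] i j.
have [fi Gi] := Hi i; have [fj Gj] := Hi j.
have gj := Gj.2.
have G1 : fv j + dotv (g j) (x i - x j) <= fv i.
  rewrite fi fj -gj. by apply: grad_ineq.
have strict : x i != x j -> 0 < fv i - fv j - dotv (g j) (x i - x j).
  move=> neq; set m := 2^-1 *: x i + (1 - 2^-1) *: x j.
  have h1 : (0:R) < 2^-1 by rewrite invr_gt0.
  have h2 : (2^-1 : R) < 1 by rewrite invf_lt1 // ltr1n.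
  have S := scf (x i) (x j) (2^-1) neq h1 h2.
  have Gm := grad_ineq (x := x j) m cf (df (x j)).
  have Em : m - x j = 2^-1 *: (x i - x j) by apply/rowP => k; rewrite !mxE; ring.
  have Gm' : fv j + 2^-1 * dotv (g j) (x i - x j) <= f m.
    rewrite fj -dotvZr -gj -Em; exact: Gm.
  have S' : f m < 2^-1 * fv i + (1 - 2^-1) * fv j by rewrite fi fj; exact: S.
  move: S' Gm'; move: (f m) (dotv (g j) (x i - x j)) => a b; lra.
split; first lra.
split; first exact: strict.
move=> gneq; case: (eqVneq (x i) (x j)) => [exy|neq]; last exact: strict.
exfalso; move/eqP: gneq; apply.
have Gi' : is_gradient f (x j) (g i) by rewrite -exy.
exact: grad_unique Gi' Gj.
Qed.
End Fwd.



Section Bwd.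
Variables (R : realType) (n : nat).

Lemma ex_pos_lb (T : finType) (P : pred T) (F : T -> R) :
  (forall t, P t -> 0 < F t) -> exists2 D, 0 < D & forall t, P t -> D <= F t.
Proof.
move=> Fp.
suff [D D0 HD] : exists2 D, 0 < D & forall t, t \in enum T -> P t -> D <= F t.
  by exists D => // t Pt; apply: HD => //; rewrite mem_enum.
elim: (enum T) => [|a s [D D0 HD]]; first by exists 1.
case Pa: (P a).
  exists (Num.min D (F a)); first by rewrite lt_min D0 Fp.
  move=> t; rewrite inE => /orP[/eqP->|ts] Pt; first by rewrite ge_min lexx orbT.
  by rewrite ge_min HD.
exists D => // t; rewrite inE => /orP[/eqP->|ts] Pt; first by rewrite Pa in Pt.
exact: HD.
Qed.

Lemma psi_identity (a b gb : 'rV[R]_n) (fa fb e : R) :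
  (fa - e / 2 * dotv a a) - ((fb - e / 2 * dotv b b) + dotv (gb - e *: b) (a - b)) =
  fa - fb - dotv gb (a - b) - e / 2 * dotv (a - b) (a - b).
Proof.
rewrite !dotvBl !dotvBr !dotvZl (dotvC b a); by field.
Qed.

Lemma sq_identity (a b : 'rV[R]_n) (t : R) :
  dotv (t *: a + (1 - t) *: b) (t *: a + (1 - t) *: b) =
  t * dotv a a + (1 - t) * dotv b b - t * (1 - t) * dotv (a - b) (a - b).
Proof.
rewrite !(dotvDl, dotvDr, dotvZl, dotvZr, dotvNl, dotvNr) (dotvC b a); ring.
Qed.

Lemma convex_add_sq (F : 'rV[R]_n -> R) e : 0 < e -> convex_fun F ->
  convex_fun (fun z => F z + e * dotv z z) /\
  strictly_convex_fun (fun z => F z + e * dotv z z).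
Proof.
move=> e0 cF.
have key : forall (a b : 'rV[R]_n) t, 0 <= t -> t <= 1 ->
   F (t *: a + (1 - t) *: b) + e * dotv (t *: a + (1 - t) *: b) (t *: a + (1 - t) *: b)
   + e * (t * (1 - t) * dotv (a - b) (a - b))
   <= t * (F a + e * dotv a a) + (1 - t) * (F b + e * dotv b b).
  move=> a b t t0 t1; rewrite sq_identity.
  have := cF a b t t0 t1.
  move: (F (t *: a + (1 - t) *: b)) (F a) (F b) (dotv a a) (dotv b b) (dotv (a - b) (a - b)) => p q r u v w H.
  nra.
split.
  move=> a b t t0 t1; have := key a b t t0 t1.
  have : 0 <= e * (t * (1 - t) * dotv (a - b) (a - b)).
    apply: mulr_ge0; first exact: ltW.
    apply: mulr_ge0; last exact: dotv_ge0.
    apply: mulr_ge0; lra.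
  move: (e * _) => w; lra.
move=> a b t ab t0 t1; have := key a b t (ltW t0) (ltW t1).
have : 0 < e * (t * (1 - t) * dotv (a - b) (a - b)).
  apply: mulr_gt0 => //; apply: mulr_gt0; last by apply: dotv_gt0; rewrite subr_eq0.
  apply: mulr_gt0; lra.
move: (e * _) => w; lra.
Qed.

End Bwd.
Section Bwd2.
Variables (R : realType) (n : nat).

Lemma diff_add_sq (F : 'rV[R]_n -> R) (e : R) (z : 'rV[R]_n) : differentiable F z ->
  differentiable (fun w => F w + e * dotv w w) z /\
  forall v : 'rV[R]_n, 'd (fun w => F w + e * dotv w w) z v = 'd F z v + e * dotv (2 *: z) v.
Proof.
move=> dF.
have E : (fun w => F w + e * dotv w w) = F + e *: (fun w : 'rV[R]_n => dotv w w) by apply/funext.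
have dq := (sq_diff z).1.
have dq' : differentiable (e *: (fun w : 'rV[R]_n => dotv w w)) z by exact: differentiableZ.
rewrite E; split; first exact: differentiableD.
move=> v.
have H1 := diffD dF dq'.
have H2 := diffZ e dq.
have H3 := (sq_diff z).2.
have e1 : 'd (F + e *: (fun w : 'rV[R]_n => dotv w w)) z v = 'd F z v + 'd (e *: (fun w : 'rV[R]_n => dotv w w)) z v
  := congr1 (fun k => k v) H1.
have e2 : 'd (e *: (fun w : 'rV[R]_n => dotv w w)) z v = e * dotv (2 *: z) v
  := etrans (congr1 (fun k => k v) H2) (congr1 (fun k => e * k v) H3).
exact: etrans e1 (congr1 (fun y => 'd F z v + y) e2).
Qed.

Lemma reps (I : finType) (x : I -> 'rV[R]_n) :
  exists s : seq I, uniq (map x s) /\ forall i, exists2 j, j \in s & x j = x i.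
Proof.
suff [s [us Hs]] : exists s : seq I, uniq (map x s) /\
    forall i, i \in enum I -> exists2 j, j \in s & x j = x i.
  by exists s; split => // i; apply: Hs; rewrite mem_enum.
elim: (enum I) => [|a l [s [us Hs]]]; first by exists [::].
case xa: (x a \in map x s).
  exists s; split => // i; rewrite inE => /orP[/eqP->|il]; last exact: Hs.
  by have /mapP[j js ->] := xa; exists j.
exists (a :: s); split; first by rewrite /= xa us.
move=> i; rewrite inE => /orP[/eqP->|il]; first by exists a; rewrite ?inE ?eqxx.
by have [j js xj] := Hs i il; exists j; rewrite ?inE ?js ?orbT.
Qed.

Lemma fsm_at (I : eqType) (h L M : R) (h0 : 0 < h) (c : I -> R) (G p : I -> 'rV[R]_n)
    (s : seq I) (j : I) (z : 'rV[R]_n) :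
  j \in s -> uniq (map p s) ->
  (forall k, p k != p j -> psi c G p k z <= psi c G p j z - M) ->
  L <= psi c G p j z - M -> (size s)%:R * (h / 4) + h <= M ->
  fsm h L c G p s z = psi c G p j z /\
  (forall v : 'rV[R]_n, 'd (fsm h L c G p s) z v = dotv (G j) v).
Proof.
case/splitPr => s1 s2 us Hk HL HM.
apply: (fsm_exact h0 _ HL).
  move=> k ks; apply: Hk.
  have P : perm_eq (map p s1 ++ p j :: map p s2) (p j :: map p s1 ++ map p s2).
    by rewrite (perm_catCA (map p s1) [:: p j] (map p s2)).
  move: us; rewrite map_cat /= (perm_uniq P) /= => /andP[nin _].
  apply: contraNneq nin => <-; rewrite -map_cat; exact: map_f.
apply: le_trans HM; rewrite lerD2r ler_pM2r ?divr_gt0 // ler_nat size_cat /=.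
by rewrite addnS ltnW // ltnS leq_addl.
Qed.

End Bwd2.


Section Bwd3.
Variables (R : realType) (n : nat).

Lemma bwd_dir (I : finType) (x : I -> 'rV[R]_n) (fv : I -> R) (g : I -> 'rV[R]_n) :
  (forall i j : I,
      0 <= fv i - fv j - dotv (g j) (x i - x j) /\
      (x i != x j -> 0 < fv i - fv j - dotv (g j) (x i - x j)) /\
      (g i != g j -> 0 < fv i - fv j - dotv (g j) (x i - x j))) ->
  (exists f : 'rV[R]_n -> R,
      convex_fun f /\ (forall z, differentiable f z) /\ strictly_convex_fun f /\
      (forall i, fv i = f (x i) /\ is_gradient f (x i) (g i))).
Proof.
move=> H.
have Heq : forall i j, x i = x j -> fv i = fv j /\ g i = g j.
  move=> i j e; have [A [_ C]] := H i j; have [A' _] := H j i.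
  rewrite e subrr dotv0r subr0 in A C; rewrite e subrr dotv0r subr0 in A'.
  have fe : fv i = fv j by lra.
  split => //; apply/eqP; apply: contraT => gn.
  by have := C gn; rewrite fe subrr ltxx.
pose del i j := fv i - fv j - dotv (g j) (x i - x j).
have [D D0 HD] := @ex_pos_lb R _ (fun ij : I * I => x ij.1 != x ij.2)
   (fun ij => del ij.1 ij.2) (fun ij Pij => (H ij.1 ij.2).2.1 Pij).
pose Q := 1 + \sum_(ij : I * I) dotv (x ij.1 - x ij.2) (x ij.1 - x ij.2).
have HS : 0 <= \sum_(ij : I * I) dotv (x ij.1 - x ij.2) (x ij.1 - x ij.2).
  by apply: sumr_ge0 => k _; exact: dotv_ge0.
have HQ : forall i j, dotv (x i - x j) (x i - x j) <= Q - 1.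
  move=> i j; rewrite /Q [1 + _]addrC addrK (bigD1 (i, j)) //=.
  have : 0 <= \sum_(k | k != (i, j)) dotv (x k.1 - x k.2) (x k.1 - x k.2).
    by apply: sumr_ge0 => k _; exact: dotv_ge0.
  move: (\sum_(k | _) _) => w; lra.
have Q0 : 0 < Q by rewrite /Q; lra.
pose e := D / Q.
have e0 : 0 < e by rewrite divr_gt0.
have eQ : e * Q = D by rewrite /e divfK // gt_eqF.
have He : forall i j, e / 2 * dotv (x i - x j) (x i - x j) <= D / 2.
  move=> i j; have := HQ i j; move: (dotv _ _) => w Hw; nra.
pose M := D / 2.
have M0 : 0 < M by rewrite /M; lra.
pose c := fun j => fv j - e / 2 * dotv (x j) (x j).
pose G := fun j => g j - e *: x j.
have Hpsi : forall i j, c i - psi c G x j (x i) = del i j - e / 2 * dotv (x i - x j) (x i - x j).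
  by move=> i j; rewrite /psi /c /G /del; exact: psi_identity.
have Hfar : forall i j, x j != x i -> psi c G x j (x i) <= c i - M.
  move=> i j nij; have := Hpsi i j; have /= := HD (i, j); rewrite eq_sym nij => /(_ isT).
  have := He i j; rewrite /M; move: (del i j) (psi c G x j (x i)) (c i) (e / 2 * _) => a b d w; lra.
have Hnear : forall i j, x j = x i -> psi c G x j (x i) = c i.
  move=> i j xji; have [fe ge] := Heq j i xji.
  by rewrite /psi /c /G fe ge xji subrr dotv0r addr0.
pose L := - (\sum_i `|c i|) - M.
have HL : forall i, L <= c i - M.
  move=> i; rewrite /L lerD2r.
  have A : `|c i| <= \sum_k `|c k|.
    by rewrite (bigD1 i) //= lerDl sumr_ge0.
  have B := ler_norm (- c i); rewrite normrN in B.
  move: (\sum_k _) A => w A; lra.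
have [s [us Hs]] := reps x.
have Hsize : (size s <= #|I|)%N.
  by have := map_uniq us => /card_uniqP <-; exact: max_card.
pose m := #|I|.
have m4 : 0 < m%:R + 4 :> R by rewrite ltr_pwDr // ler0n.
pose h := M / (m%:R + 4).
have h0 : 0 < h by rewrite divr_gt0.
have hm : h * (m%:R + 4) = M by rewrite /h divfK // gt_eqF.
have HM : (size s)%:R * (h / 4) + h <= M.
  have : (size s)%:R <= m%:R :> R by rewrite ler_nat.
  move: (size s)%:R (m%:R : R) hm => a b hm' ab; nra.
pose F := fsm h L c G x s.
have cvF : convex_fun F := fsm_convex L h0 c G x s.
have e20 : 0 < e / 2 by rewrite divr_gt0.
have [cf scf] := convex_add_sq e20 cvF.
exists (fun z => F z + e / 2 * dotv z z); split => //; split.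
  by move=> z; exact: (diff_add_sq (e / 2) (fsm_diff L h0 c G x s z)).1.
split => // i.
have [j js xji] := Hs i.
have [fe ge] := Heq j i xji.
have [Fv Fd] : fsm h L c G x s (x i) = psi c G x j (x i) /\
  (forall v : 'rV[R]_n, 'd (fsm h L c G x s) (x i) v = dotv (G j) v).
  apply: (@fsm_at R n I h L M h0 c G x s j (x i) js us _ _ HM).
    move=> k nkj; rewrite (Hnear i j xji); apply: Hfar; rewrite -xji; exact: nkj.
  by rewrite (Hnear i j xji); exact: HL.
split.
  rewrite /F Fv Hnear // /c; ring.
split.
  exact: (diff_add_sq (e / 2) (fsm_diff L h0 c G x s (x i))).1.
move=> v.
have D1 := (diff_add_sq (e / 2) (fsm_diff L h0 c G x s (x i))).2 v.
apply: (etrans D1); rewrite Fd /G ge xji dotvBl !dotvZl.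
move: (dotv (g i) v) (dotv (x i) v) => a b; by field.
Qed.
End Bwd3.

End Helpers.
Import Helpers.

Theorem proposition4p2 (R : realType) (n : nat) (I : finType)
  (x : I -> 'rV[R]_n) (fv : I -> R) (g : I -> 'rV[R]_n) :
  (exists f : 'rV[R]_n -> R,
      convex_fun f /\ (forall z, differentiable f z) /\ strictly_convex_fun f /\
      (forall i, fv i = f (x i) /\ is_gradient f (x i) (g i)))
  <->
  (forall i j : I,
      0 <= fv i - fv j - dotv (g j) (x i - x j) /\
      (x i != x j -> 0 < fv i - fv j - dotv (g j) (x i - x j)) /\
      (g i != g j -> 0 < fv i - fv j - dotv (g j) (x i - x j))).
Proof.
split; [exact: fwd_dir | exact: bwd_dir].
Qed.
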